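(* For every integer $k\ge 2$: (i) $rc^*(C_{2k}(\{1,k\}))=src^*(C_{2k}(\{1,k\}))=k$; (ii) $rc^*(C_{2k}(\{1,k+1\}))=src^*(C_{2k}(\{1,k+1\}))=k$.
   Context: For $n\ge 2$ and $S\subseteq\{1,\dots,n-1\}$, the circulant digraph $C_n(S)$ has vertex set $\{v_0,\dots,v_{n-1}\}$ and arcs $v_iv_j$ for all $i,j$ with $j-i\equiv s \pmod n$ for some $s\in S$. For a strongly connected digraph $D$ and an arc-colouring $\Gamma:A(D)\to\{1,\dots,k\}$, a directed path is rainbow if its arcs have pairwise distinct colours. $\Gamma$ is rainbow connected if for every ordered pair of distinct vertices $x,y$ there is a rainbow directed $xy$-path; $rc^*(D)$ is the minimum number of colours of such a colouring. $\Gamma$ is strongly rainbow connected if for every ordered pair of distinct vertices $x,y$ there is a rainbow directed $xy$-path of length $d_D(x,y)$; $src^*(D)$ is the minimum such number. *)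

(* Defs.v *)
From mathcomp Require Import all_boot.
Set Implicit Arguments. Unset Strict Implicit. Unset Printing Implicit Defensive.

Definition circ_arc (n : nat) (S : seq nat) : rel 'I_n :=
  fun i j => ((j + n - i) %% n) \in S.

(* A directed x-y path in C_n(S): vertex sequence x :: p, consecutive
   vertices joined by arcs, ending at y, all vertices distinct.
   Its length is size p. *)
Definition dpath (n : nat) (S : seq nat) (x y : 'I_n) (p : seq 'I_n) : bool :=
  [&& path (circ_arc S) x p, last x p == y & uniq (x :: p)].

(* Arc colourings with colour set 'I_k (i.e. k colours); only values on
   arcs matter. *)
Definition arc_colours (n k : nat) (c : 'I_n -> 'I_n -> 'I_k)
  (x : 'I_n) (p : seq 'I_n) : seq 'I_k :=
  [seq c a.1 a.2 | a <- zip (x :: p) p].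

Definition rainbow (n k : nat) (c : 'I_n -> 'I_n -> 'I_k) x p : bool :=
  uniq (arc_colours c x p).

Definition rainbow_connected (n : nat) (S : seq nat) (k : nat)
  (c : 'I_n -> 'I_n -> 'I_k) : Prop :=
  forall x y : 'I_n, x != y -> exists p, dpath S x y p && rainbow c x p.

Definition strongly_rainbow_connected (n : nat) (S : seq nat) (k : nat)
  (c : 'I_n -> 'I_n -> 'I_k) : Prop :=
  forall x y : 'I_n, x != y -> exists p,
    [/\ dpath S x y p, rainbow c x p &
        forall q, dpath S x y q -> size p <= size q].

Definition rc_eq (n : nat) (S : seq nat) (k : nat) : Prop :=
  (exists c : 'I_n -> 'I_n -> 'I_k, rainbow_connected S c) /\
  (forall k' (c : 'I_n -> 'I_n -> 'I_k'), rainbow_connected S c -> k <= k').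

Definition src_eq (n : nat) (S : seq nat) (k : nat) : Prop :=
  (exists c : 'I_n -> 'I_n -> 'I_k, strongly_rainbow_connected S c) /\
  (forall k' (c : 'I_n -> 'I_n -> 'I_k'), strongly_rainbow_connected S c -> k <= k').

(* Main.v *)
Require Import Defs.
From mathcomp Require Import all_boot.
From mathcomp Require Import zify.
Set Implicit Arguments. Unset Strict Implicit. Unset Printing Implicit Defensive.

Section Main.
Variable k : nat.
Hypothesis hk : 2 <= k.
Local Notation n := (2 * k).

Lemma npos : 0 < n. Proof. lia. Qed.
Lemma kpos : 0 < k. Proof. lia. Qed.

Definition om (t : nat) : 'I_n := Ordinal (ltn_pmod t npos).
Definition ok (t : nat) : 'I_k := Ordinal (ltn_pmod t kpos).

Lemma omK (x : 'I_n) : om x = x.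
Proof. by apply: val_inj; rewrite /= modn_small. Qed.

Lemma mod2 t m : t < m + m -> t %% m = if t < m then t else t - m.
Proof.
case: ifP => h1 h2; first by rewrite modn_small.
have hm : m <= t by lia.
rewrite -{1}(subnK hm) modnDr modn_small //; lia.
Qed.

Lemma modsub x y T : x < n -> y < n -> (x + T) %% n = y -> T %% n = (y + n - x) %% n.
Proof.
move=> hx hy h.
have e : T + n = x + T + (n - x) by lia.
by rewrite -(modnDr T n) e -(modnDml (x + T)) h addnBA // ltnW.
Qed.

Lemma modinv x y : x < n -> y < n -> (x + (y + n - x) %% n) %% n = y.
Proof.
move=> hx hy; rewrite modnDmr addnBA; last by lia.
by rewrite addKn modnDr modn_small.
Qed.

Lemma arcE v t : ((om (v + t) : nat) + n - om v) %% n = t %% n.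
Proof.
symmetry; apply: modsub; rewrite ?ltn_pmod ?npos //.
by rewrite modnDml.
Qed.

Lemma circ_om S v t : t < n -> t \in S -> circ_arc S (om v) (om (v + t)).
Proof. by move=> ht hS; rewrite /circ_arc arcE modn_small. Qed.

Definition run v m := [seq om (v + j) | j <- iota 1 m].

Lemma run_S v m : run v m.+1 = om (v + 1) :: run (v + 1) m.
Proof.
rewrite /run /= -[2]/(1 + 1) iotaDl -map_comp; congr (_ :: _).
by apply: eq_map => j /=; rewrite addnA.
Qed.

Lemma path_run S v m : 1 \in S -> path (circ_arc S) (om v) (run v m).
Proof.
move=> h1; elim: m v => [//|m IH] v; rewrite run_S /= IH andbT.
apply: circ_om => //; lia.
Qed.

Lemma last_run v m : last (om v) (run v m) = om (v + m).
Proof.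
elim: m v => [|m IH] v; first by rewrite addn0.
by rewrite run_S /= IH; congr om; lia.
Qed.

Definition col s : 'I_n -> 'I_n -> 'I_k := fun i j =>
  if ((j : nat) + n - i) %% n == 1 then ok i else ok (i + s - 1).

Lemma kdvd : k %| n. Proof. by rewrite dvdn_mull. Qed.

Lemma colours_run s v m :
  map val (arc_colours (col s) (om v) (run v m)) = [seq (v + j) %% k | j <- iota 0 m].
Proof.
elim: m v => [//|m IH] v; rewrite run_S.
have -> : arc_colours (col s) (om v) (om (v + 1) :: run (v + 1) m)
  = col s (om v) (om (v + 1)) :: arc_colours (col s) (om (v + 1)) (run (v + 1) m) by [].
rewrite /= IH /col arcE (modn_small (_ : 1 < n)); last by lia.
rewrite eqxx /= modn_dvdm ?kdvd // addn0; congr (_ :: _).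
have -> : iota 1 m = map (addn 1) (iota 0 m) by rewrite -iotaDl.
rewrite -map_comp; apply: eq_map => j /=.
by rewrite addnA.
Qed.

Lemma uniq_modk b len : len <= k -> uniq [seq (b + j) %% k | j <- iota 0 len].
Proof.
move=> hl; rewrite map_inj_in_uniq ?iota_uniq // => i j.
rewrite !mem_iota => /andP[_ hi] /andP[_ hj] /eqP e.
move: e; rewrite eqn_modDl !modn_small; [by move/eqP| lia | lia].
Qed.

Lemma uniq_om b len : len <= n -> uniq [seq om (b + j) | j <- iota 0 len].
Proof.
move=> hl; rewrite map_inj_in_uniq ?iota_uniq // => i j.
rewrite !mem_iota => /andP[_ hi] /andP[_ hj] /(congr1 val) /= /eqP e.
move: e; rewrite eqn_modDl !modn_small; [by move/eqP| lia | lia].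
Qed.

Definition pth s x d :=
  if s <= d then om (x + s) :: run (x + s) (d - s) else run x d.

Lemma size_pth s x d : size (pth s x d) = if s <= d then 1 + (d - s) else d.
Proof. by rewrite /pth; case: ifP => _; rewrite /= /run size_map size_iota. Qed.

Lemma run0 v m : om v :: run v m = [seq om (v + j) | j <- iota 0 m.+1].
Proof. by rewrite /= addn0. Qed.

Lemma pth_ok s x d : 2 <= s -> s < n -> k <= s -> s <= k.+1 -> 0 < d -> d < n ->
  x < n ->
  dpath [:: 1; s] (om x) (om (x + d)) (pth s x d) && rainbow (col s) (om x) (pth s x d).
Proof.
move=> h2s hsn hks hsk hd0 hdn hx; rewrite /dpath /rainbow /pth.
case: ifP => hsd.
- apply/andP; split; [apply/and3P; split|].
  + rewrite /= path_run // andbT; apply: circ_om => //; by rewrite !inE eqxx orbT.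
  + by rewrite /= last_run; apply/eqP; congr (om _); lia.
  + rewrite cons_uniq run0; apply/andP; split; last by apply: uniq_om; lia.
    apply/mapP => -[j hj /(congr1 val) /=]; rewrite mem_iota in hj.
    rewrite (modn_small hx) mod2; last by lia.
    move: hj => /andP[_]; rewrite add0n ltnS; case: ifP; lia.
  + rewrite -(map_inj_uniq val_inj).
    have -> : arc_colours (col s) (om x) (om (x + s) :: run (x + s) (d - s))
      = col s (om x) (om (x + s)) :: arc_colours (col s) (om (x + s)) (run (x + s) (d - s)) by [].
    rewrite map_cons colours_run /col arcE (modn_small hsn).
    have -> : (s == 1) = false by apply/eqP; lia.
    rewrite /= (modn_small hx).
    rewrite -cons_uniq.     have -> : (x + s - 1) %% k :: [seq (x + s + j) %% k | j <- iota 0 (d - s)]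
      = [seq (x + s - 1 + j) %% k | j <- iota 0 (d - s).+1].
      rewrite /= addn0; congr (_ :: _).
      have -> : iota 1 (d - s) = map (addn 1) (iota 0 (d - s)) by rewrite -iotaDl.
      rewrite -map_comp; apply: eq_map => j /=; congr (_ %% k); lia.
    apply: uniq_modk; lia.
- apply/andP; split; [apply/and3P; split|].
  + exact: path_run.
  + by rewrite last_run.
  + by rewrite run0; apply: uniq_om; lia.
  + rewrite -(map_inj_uniq val_inj) colours_run; apply: uniq_modk; lia.
Qed.

Lemma walk s (x : 'I_n) q : path (circ_arc [:: 1; s]) x q ->
  exists a b, a + b = size q /\ val (last x q) = (x + a + b * s) %% n.
Proof.
elim: q x => [|y q IH] x /=.
  by move=> _; exists 0, 0; rewrite /= mul0n !addn0 modn_small.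
move=> /andP[hxy /IH [a [b [hab hl]]]].
have hy : val y = (x + (y + n - x) %% n) %% n by rewrite modinv.
move: hxy; rewrite /circ_arc !inE => /orP[] /eqP e; rewrite e in hy.
- exists a.+1, b; split; first lia.
  rewrite hl hy -addnA modnDml; congr (_ %% n); lia.
- exists a, b.+1; split; first lia.
  rewrite hl hy -addnA modnDml (mulSn b); congr (_ %% n); lia.
Qed.

Lemma minpath s (x y : 'I_n) q : dpath [:: 1; s] x y q ->
  exists a b, a + b = size q /\ (a + b * s) %% n = (y + n - x) %% n.
Proof.
case/and3P => hp /eqP hl _; have [a [b [hab e]]] := walk hp.
exists a, b; split => //; apply: modsub => //.
by rewrite addnA -e hl.
Qed.

Lemma mododdk t b : (t + b * k) %% n = (t + odd b * k) %% n.
Proof.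
rewrite -{1}(odd_double_half b) mulnDl addnA -muln2 -mulnA.
by rewrite addnC modnMDl.
Qed.

Lemma NT1 a b d : (a + b * k) %% n = d -> 0 < d -> d < n ->
  (if k <= d then 1 + (d - k) else d) <= a + b.
Proof.
rewrite mododdk => h hd0 hdn.
have he : odd b <= b by case: (odd b) (@odd_gt0 b) => //= ->.
case: (leqP n a) => ha; first by case: ifP; lia.
move: he h; case: (odd b) => /= he; rewrite ?mul1n ?mul0n ?addn0 mod2; try lia;
  case: ifP; case: ifP; lia.
Qed.

Lemma NT2 a b d : (a + b * k.+1) %% n = d -> 0 < d -> d < n ->
  (if k.+1 <= d then 1 + (d - k.+1) else d) <= a + b.
Proof.
have -> : a + b * k.+1 = (a + b) + b * k by rewrite mulnSr addnA addnAC.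
rewrite mododdk => h hd0 hdn.
have he : odd b <= b by case: (odd b) (@odd_gt0 b) => //= ->.
case: (leqP n (a + b)) => ha; first by case: ifP; lia.
move: he h; case: (odd b) => /= he; rewrite ?mul1n ?mul0n ?addn0 mod2; try lia;
  case: ifP; case: ifP; lia.
Qed.

Lemma src_ok s : 2 <= s -> s < n -> k <= s -> s <= k.+1 ->
  (forall a b d, (a + b * s) %% n = d -> 0 < d -> d < n ->
     (if s <= d then 1 + (d - s) else d) <= a + b) ->
  strongly_rainbow_connected [:: 1; s] (col s).
Proof.
move=> h2s hsn hks hsk hNT x y hxy.
have [d hd] : exists d, d = (y + n - x) %% n by eexists.
have hdn : d < n by rewrite hd ltn_pmod ?npos.
have hd0 : 0 < d.
  rewrite lt0n; apply/negP => /eqP e; case/eqP: hxy; apply: val_inj.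
  by rewrite /= -(modinv (ltn_ord x) (ltn_ord y)) -hd e addn0 modn_small.
have ey : y = om (x + d) by apply: val_inj; rewrite /= hd modinv.
have /andP[h1 h2] := pth_ok h2s hsn hks hsk hd0 hdn (ltn_ord x).
rewrite omK -ey in h1 h2.
exists (pth s x d); split => // q hq.
have [a [b [hab e]]] := minpath hq.
rewrite -hab size_pth; apply: hNT => //; by rewrite e hd.
Qed.

Lemma strong_weak S k' (c : 'I_n -> 'I_n -> 'I_k') :
  strongly_rainbow_connected S c -> rainbow_connected S c.
Proof.
move=> h x y hxy; have [p [h1 h2 _]] := h x y hxy.
by exists p; rewrite h1 h2.
Qed.

Lemma lower S k' (c : 'I_n -> 'I_n -> 'I_k') (x y : 'I_n) L : x != y ->
  (forall q, dpath S x y q -> L <= size q) -> rainbow_connected S c -> L <= k'.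
Proof.
move=> hxy hq /(_ x y hxy) [p /andP[hp hr]].
apply: leq_trans (hq _ hp) _.
have <- : size (arc_colours c x p) = size p.
  by rewrite size_map size_zip /= (minn_idPr (leqnSn _)).
move/card_uniqP: hr => <-.
by apply: leq_trans (max_card _) _; rewrite card_ord.
Qed.

Lemma both s d0 : 2 <= s -> s < n -> k <= s -> s <= k.+1 ->
  (forall a b d, (a + b * s) %% n = d -> 0 < d -> d < n ->
     (if s <= d then 1 + (d - s) else d) <= a + b) ->
  0 < d0 -> d0 < n -> (if s <= d0 then 1 + (d0 - s) else d0) = k ->
  rc_eq n [:: 1; s] k /\ src_eq n [:: 1; s] k.
Proof.
move=> h2s hsn hks hsk hNT hd0 hdn hK.
have hS := src_ok h2s hsn hks hsk hNT.
have hL : forall k' (c : 'I_n -> 'I_n -> 'I_k'), rainbow_connected [:: 1; s] c -> k <= k'.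
  move=> k' c; apply: (@lower _ _ _ (om 0) (om d0)).
    apply/eqP => /(congr1 val) /=; rewrite mod0n modn_small //; lia.
  move=> q /minpath [a [b [hab e]]]; rewrite -hab -hK; apply: hNT => //.
  by rewrite e /= mod0n subn0 (modn_small hdn) modnDr modn_small.
split; split.
- by exists (col s); apply: strong_weak.
- exact: hL.
- by exists (col s).
- by move=> k' c /strong_weak; apply: hL.
Qed.
End Main.

Theorem theorem9 (k : nat) (hk : 2 <= k) :
  (rc_eq (2 * k) [:: 1; k] k /\ src_eq (2 * k) [:: 1; k] k) /\
  (rc_eq (2 * k) [:: 1; k.+1] k /\ src_eq (2 * k) [:: 1; k.+1] k).
Proof.
split.
- apply: (@both k hk k (2 * k - 1)); try lia.
  + exact: NT1.
  + case: ifP; lia.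
- apply: (@both k hk k.+1 k); try lia.
  + exact: NT2.
  + case: ifP; lia.
Qed.
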